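(* Let $b_0\ge1$ be an integer, $m>1$, and $0<\gamma<1/m$, and set $\alpha=-(\log\gamma)/\log m$. Let $B_0,B_1,\dots$ be independent random variables with $B_k$ uniformly distributed on the interval $[0,2b_0m^k-1]$ (mean $b_0m^k-1/2$), and let $\kappa$ be an independent random variable on $\{0,1,2,\dots\}$ with $\mathbb{P}[\kappa=k]=\gamma^k-\gamma^{k+1}$. Let $\Omega=\sum_{k=0}^{\kappa}B_k$. Then $\Omega$ has a wide-sense heavy-tailed distribution. Moreover, for real $c\ge 0$, $\mathbb{E}[\Omega^c]$ is infinite if $c\ge\alpha$ and finite if $0\le c<\alpha$.
   Context: This is the per-packet backoff of IEEE 802.11 with infinitely many backoff stages ($K=\infty$), multiplicative factor $m$, initial contention window $2b_0$ and collision probability $\gamma$ (which in the model satisfies $\gamma<1/m$, so $\alpha>1$). A random variable with density $f$ on $[0,\infty)$ is called wide-sense heavy-tailed if $\int_0^\infty e^{tx}f(x)\,dx=\infty$ for all $t>0$. *)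

(* Defs.v *)
From HB Require Import structures.
From mathcomp Require Import all_boot all_order all_algebra.
From mathcomp Require Import all_classical all_reals all_analysis.
Set Implicit Arguments. Unset Strict Implicit. Unset Printing Implicit Defensive.
Import Order.TTheory GRing.Theory Num.Theory.
Local Open Scope classical_set_scope.
Local Open Scope ring_scope.

Definition indep_kappa_B d (T : measurableType d) (R : realType)
  (P : probability T R) (B : nat -> T -> R) (kappa : T -> nat) : Prop :=
  forall (s : seq nat) (A : nat -> set R) (S : set nat),
    uniq s -> (forall k, measurable (A k)) ->
    P ([set w | S (kappa w)] `&` \bigcap_(k in [set k | k \in s]) (B k @^-1` A k))
    = (P [set w | S (kappa w)] *
       \big[*%E/1%E]_(k <- s) P (B k @^-1` A k))%E.

Definition uniform_on_0 d (T : measurableType d) (R : realType)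
  (P : probability T R) (X : T -> R) (L : R) : Prop :=
  forall A : set R, measurable A ->
    P (X @^-1` A) = (lebesgue_measure (A `&` `[0%R, L]%classic) * (L^-1)%:E)%E.

Definition Omega d (T : measurableType d) (R : realType)
  (B : nat -> T -> R) (kappa : T -> nat) : T -> R :=
  fun w => \sum_(0 <= k < (kappa w).+1) B k w.

Definition wide_sense_heavy_tailed d (T : measurableType d) (R : realType)
  (P : probability T R) (X : T -> R) : Prop :=
  forall t : R, 0 < t -> (\int[P]_w (expR (t * X w))%:E)%E = +oo%E.

(* Main.v *)
Require Import Defs.
From HB Require Import structures.
From mathcomp Require Import all_boot all_order all_algebra.
From mathcomp Require Import all_classical all_reals all_analysis.
From mathcomp Require Import ring lra.
From mathcomp Require Import measurable_realfun.
Import Order.TTheory GRing.Theory Num.Theory.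
Local Open Scope classical_set_scope.
Local Open Scope ring_scope.

Lemma geo_sum (R : realType) (m : R) n : 1 < m ->
  \sum_(0 <= j < n) m ^+ j <= m ^+ n / (m - 1).
Proof.
move=> m1; rewrite ler_pdivlMr ?subr_gt0//.
have -> : (\sum_(0 <= j < n) m ^+ j) * (m - 1) = m ^+ n - 1.
  elim: n => [|n IH]; first by rewrite big_geq// mul0r expr0 subrr.
  by rewrite big_nat_recr//= mulrDl IH exprS; ring.
by rewrite lerBlDr lerDl.
Qed.


Lemma eseries_div (R : realType) (u : nat -> \bar R) (e : R) :
  0 < e -> (forall k, (e%:E <= u k)%E) -> (\sum_(k <oo) u k = +oo)%E.
Proof.
move=> e0 ue.
have u0 k : (0 <= u k)%E by apply: le_trans (ue k); rewrite lee_fin ltW.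
have ps n : ((n%:R * e)%:E <= \sum_(0 <= k < n) u k)%E.
  have := @lee_sum R nat (fun=> e%:E) u (index_iota 0 n) xpredT (fun k _ => ue k).
  apply: le_trans.
  by rewrite big_mkord sumEFin sumr_const card_ord mulr_natl.
have ge n : ((n%:R * e)%:E <= \sum_(k <oo) u k)%E.
  by apply: le_trans (ps n) _; apply: nneseries_lim_ge => k _ _; exact: u0.
have s0 : (0 <= \sum_(k <oo) u k)%E by apply: nneseries_ge0 => k _ _; exact: u0.
move: s0; case E : (\sum_(k <oo) u k)%E => [r| |] //= r0.
have := ge (Num.bound (r / e)).+1; rewrite E lee_fin -ler_pdivlMr// => H.
have := archi_boundP (x := r / e); rewrite divr_ge0 ?(ltW e0)// => /(_ isT) H2.
have : ((Num.bound (r / e)).+1%:R <= (Num.bound (r / e))%:R :> R).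
  by apply: le_trans H (ltW H2).
by rewrite ler_nat ltnn.
Qed.

Lemma eseries_geo_fin (R : realType) (u : nat -> \bar R) (C r : R) :
  0 <= C -> 0 < r -> r < 1 -> (forall k, (0 <= u k)%E) ->
  (forall k, (u k <= (C * r ^+ k)%:E)%E) -> (\sum_(k <oo) u k < +oo)%E.
Proof.
move=> C0 r0 r1 u0 uC.
apply: (@le_lt_trans _ _ (\sum_(k <oo) (C * r ^+ k)%:E)%E).
  by apply: lee_nneseries => // k _ _.
apply: (@le_lt_trans _ _ (C * (1 - r)^-1)%:E); last exact: ltry.
apply: lime_le.
  by apply: is_cvg_nneseries => k _ _; rewrite lee_fin mulr_ge0// exprn_ge0// ltW.
apply: nearW => n /=.
rewrite sumEFin lee_fin.
have := @geometric_le_lim R n C r C0 r0; rewrite ger0_norm ?(ltW r0)// => /(_ r1).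
by rewrite /series/= /geometric/=.
Qed.

Lemma fin_step (R : realType) (h Q G g : R) k : 0 <= h -> 0 <= Q -> 0 < g -> g < 1 ->
  1 <= g * Q -> h * Q ^+ k <= G ->
  h * ((1 - g) / 2) <= G * ((g ^+ k - g ^+ k.+1) / 2).
Proof.
move=> h0 Q0 g0 g1 gQ hG.
have -> : (g ^+ k - g ^+ k.+1) / 2 = g ^+ k * ((1 - g) / 2) by rewrite exprS; ring.
have c0 : 0 <= (1 - g) / 2 by rewrite divr_ge0// subr_ge0 ltW.
have gk0 : 0 <= g ^+ k by rewrite exprn_ge0// ltW.
apply: (@le_trans _ _ (h * (g * Q) ^+ k * ((1 - g) / 2))).
  rewrite -mulrA ler_wpM2l// ler_peMl//; exact: exprn_ege1.
have -> : h * (g * Q) ^+ k * ((1 - g) / 2) = (h * Q ^+ k) * (g ^+ k * ((1 - g) / 2)).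
  by rewrite exprMn; ring.
by rewrite ler_wpM2r// mulr_ge0.
Qed.

Theorem theorem2 (R : realType) (d : measure_display) (T : measurableType d)
  (P : probability T R) (b0 : nat) (m gamma : R)
  (B : nat -> T -> R) (kappa : T -> nat) :
  (1 <= b0)%N -> 1 < m -> 0 < gamma -> gamma < m^-1 ->
  (forall k, measurable_fun setT (B k)) ->
  (forall k, uniform_on_0 P (B k) (2 * b0%:R * m ^+ k - 1)) ->
  (forall k, measurable [set w | kappa w = k]) ->
  (forall k, P [set w | kappa w = k] = (gamma ^+ k - gamma ^+ k.+1)%:E) ->
  indep_kappa_B P B kappa ->
  let alpha := - ln gamma / ln m in
  wide_sense_heavy_tailed P (Omega B kappa) /\
  (forall c : R, 0 <= c ->
     (alpha <= c -> (\int[P]_w ((Omega B kappa w) `^ c)%:E)%E = +oo%E) /\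
     (c < alpha -> (\int[P]_w ((Omega B kappa w) `^ c)%:E < +oo)%E)).
Proof.
move=> b01 m1 g0 gm mB unifB mK PK indep alpha.
set L := fun k : nat => 2 * b0%:R * m ^+ k - 1.
set Om := Omega B kappa.
set F := fun k => [set w | kappa w = k].
have m0 : 0 < m by apply: lt_trans m1.
have b0R : 1 <= b0%:R :> R by rewrite ler1n.
have mk1 k : 1 <= m ^+ k by apply: exprn_ege1; exact: ltW.
have Lge k : m ^+ k <= L k.
  rewrite /L; have := mk1 k; set x := m ^+ k => x1.
  have : 2 * x <= 2 * b0%:R * x.
    by rewrite -mulrA ler_pM2l// ler_peMl// (le_trans _ x1).
  lra.
have L0 k : 0 < L k by apply: lt_le_trans (Lge k); apply: lt_le_trans (mk1 k).
have g1 : gamma < 1.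
  by apply: lt_trans gm _; rewrite invf_lt1.
have PB k (a b : R) : 0 <= a -> a <= b -> b <= L k ->
    P (B k @^-1` `[a, b]%classic) = ((b - a) / L k)%:E.
  move=> a0 ab bL; rewrite unifB; last exact: measurable_itv.
  rewrite setIidl; last first.
    move=> x /=; rewrite !in_itv/= => /andP[ax xb].
    by apply/andP; split; [apply: le_trans ax|apply: le_trans bL].
  rewrite lebesgue_measure_itv/= lte_fin.
  have [ab'|ba] := ltP a b; first by rewrite -EFinD -EFinM.
  have -> : a = b by apply/le_anti/andP.
  by rewrite subrr mul0r mul0e.
have PN k : P (B k @^-1` (~` `[0, L k]%classic)) = 0%E.
  rewrite unifB; last by apply: measurableC; exact: measurable_itv.
  by rewrite setICl measure0 mul0e.
have mOm : measurable_fun setT Om.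
  move=> _ Y mY; rewrite setTI.
  have -> : Om @^-1` Y = \bigcup_k (F k `&`
      (fun w => \sum_(j <- index_iota 0 k.+1) B j w) @^-1` Y).
    apply/seteqP; split.
      by move=> w Yw; exists (kappa w).
    by move=> w [k _ [/= kw Yw]]; rewrite /Om /Omega /= kw.
  apply: bigcupT_measurable => k; apply: measurableI; first exact: mK.
  have mS : measurable_fun setT (fun w => \sum_(j <- index_iota 0 k.+1) B j w).
    by apply: measurable_sum.
  by have := mS measurableT Y mY; rewrite setTI.
have bigF : \bigcup_k F k = setT.
  by apply/seteqP; split => // w _; exists (kappa w).
have decomp (f : T -> \bar R) : measurable_fun setT f -> (forall w, (0 <= f w)%E) ->
    (\int[P]_w f w = \sum_(k <oo) \int[P]_(w in F k) f w)%E.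
  move=> mf f0; have := @ge0_integral_bigcup d T R P F f mK.
  rewrite /= bigF => <- //.
  by move=> i j _ _ [w [/= <- <-]].
have LB (g : R -> R) (e : R) : measurable_fun setT g -> (forall x, 0 <= g x) ->
    (forall x y, 0 <= x -> x <= y -> g x <= g y) -> 0 < e ->
    (forall k, e <= g (L k / 2) * ((gamma ^+ k - gamma ^+ k.+1) / 2)) ->
    (\int[P]_w (g (Om w))%:E = +oo)%E.
  move=> mg gge0 gmono e0 ge.
  have mf : measurable_fun setT (fun w => (g (Om w))%:E).
    by apply/measurable_EFinP; exact: measurableT_comp.
  rewrite decomp //; last by move=> w; rewrite lee_fin.
  apply: (@eseries_div R (fun k => \int[P]_(w in F k) (g (Om w))%:E)%E e e0) => k.
  set A := fun j => if j == k then `[L j / 2, L j]%classic else `[0, L j]%classic.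
  set E := [set w | [set k] (kappa w)] `&`
     \bigcap_(j in [set j | j \in index_iota 0 k.+1]) (B j @^-1` A j).
  have mA j : measurable (A j) by rewrite /A; case: ifP => _; exact: measurable_itv.
  have L2 j : 0 <= L j / 2 by rewrite divr_ge0// ltW.
  have L2L j : L j / 2 <= L j by have := L0 j; lra.
  have PE : P E = ((gamma ^+ k - gamma ^+ k.+1) / 2)%:E.
    rewrite /E indep //; last exact: iota_uniq.
    rewrite PK big_nat_recr //= big_seq big1; last first.
      move=> j; rewrite mem_index_iota => /andP[_ jk].
      rewrite /A (ltn_eqF jk) PB //; last exact: ltW.
      by rewrite subr0 divff// gt_eqF.
    rewrite /A eqxx PB // mul1e -EFinM; congr EFin.
    have := L0 k; move: (L k) => x x0; field; by rewrite gt_eqF.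
  have mE : measurable E.
    apply: measurableI; first exact: mK.
    apply: bigcap_measurable; first by exists 0%N; rewrite /= mem_index_iota.
    move=> j _; rewrite -[X in measurable X]setTI; exact: mB _ measurableT _ (mA j).
  have EF : E `<=` F k by move=> w [].
  have H1 : (\int[P]_(w in E) (g (Om w))%:E <= \int[P]_(w in F k) (g (Om w))%:E)%E.
    apply: ge0_subset_integral => //; first exact: mK.
      exact: measurable_funS mf.
    by move=> w _; rewrite lee_fin.
  apply: le_trans H1.
  have H2 : (e%:E <= \int[P]_(w in E) (cst (g (L k / 2))%:E) w)%E.
    rewrite integral_cst //.
    have -> : ((g (L k / 2))%:E * P E = (g (L k / 2) * ((gamma ^+ k - gamma ^+ k.+1) / 2))%:E)%E.
      by rewrite PE -EFinM.
    by rewrite lee_fin.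
  apply: le_trans H2 _.
  apply: ge0_le_integral => //.
  - by move=> w _; rewrite lee_fin.
  - exact: measurable_funS mf.
  - move=> w [/= kw Hw]; rewrite lee_fin; apply: gmono => //.
    have HB j : (j <= k)%N -> A j (B j w).
      by move=> jk; apply: (Hw j); rewrite /= mem_index_iota.
    rewrite /Om /Omega kw big_nat_recr//=.
    have := HB k (leqnn k); rewrite /A eqxx /= in_itv/= => /andP[Bk _].
    suff : 0 <= \sum_(0 <= j < k) B j w by move=> ?; lra.
    rewrite big_seq; apply: sumr_ge0 => j; rewrite mem_index_iota => /andP[_ jk].
    by have := HB j (ltnW jk); rewrite /A (ltn_eqF jk) /= in_itv/= => /andP[].
have [N [mN PN0 NN]] : P.-negligible (\bigcup_k (B k @^-1` (~` `[0, L k]%classic))).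
  apply: negligible_bigcup => k; exists (B k @^-1` (~` `[0, L k]%classic)); split => //; last exact: PN.
  rewrite -[X in measurable X]setTI; apply: mB => //.
  by apply: measurableC; exact: measurable_itv.
have lnm : 0 < ln m by apply: ln_gt0.
have mpow x : m `^ x = expR (x * ln m) by rewrite /powR gt_eqF.
have malpha : m `^ alpha = gamma^-1.
  by rewrite mpow /alpha mulrAC -mulrA divff ?gt_eqF// mulr1 expRN lnK//.


set K := 2 * b0%:R * (m / (m - 1)).
have K0 : 0 <= K.
  by rewrite /K !mulr_ge0 ?ler0n ?invr_ge0 ?subr_ge0 ?ltW.
have UB (c : R) : 0 <= c -> gamma * m `^ c < 1 ->
    (\int[P]_w (Om w `^ c)%:E < +oo)%E.
  move=> c0 r1.
  have mf : measurable_fun setT (fun w => (Om w `^ c)%:E).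
    apply/measurable_EFinP; exact: (measurableT_comp (measurable_powR c) mOm).
  rewrite decomp //; last by move=> w; rewrite lee_fin powR_ge0.
  apply: (@eseries_geo_fin R (fun k => \int[P]_(w in F k) (Om w `^ c)%:E)%E
     (K `^ c) (gamma * m `^ c)) => //.
  - exact: powR_ge0.
  - by rewrite mulr_gt0// powR_gt0.
  - by move=> k; apply: integral_ge0 => w _; rewrite lee_fin powR_ge0.
  move=> k /=.
  have mFk := mK k.
  rewrite (ge0_negligible_integral _ _ _ _ PN0) //; last first.
  - by move=> w _; rewrite lee_fin powR_ge0.
  - exact: measurable_funS mf.
  have mFN : measurable (F k `\` N) by apply: measurableD.
  have H1 : (\int[P]_(w in F k `\` N) (Om w `^ c)%:E <=
             \int[P]_(w in F k `\` N) (cst ((K * m ^+ k) `^ c)%:E) w)%E.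
    apply: ge0_le_integral => //.
    - by move=> w _; rewrite lee_fin powR_ge0.
    - exact: measurable_funS mf.
    move=> w [/= kw nNw]; rewrite lee_fin.
    have Bj j : B j w \in `[0, L j].
      case: (boolP (B j w \in `[0, L j])) => // H; exfalso; apply: nNw; apply: NN.
      by exists j => //=; apply/negP.
    have Om0 : 0 <= Om w.
      rewrite /Om /Omega big_seq; apply: sumr_ge0 => j _.
      by have := Bj j; rewrite in_itv/= => /andP[].
    apply: ge0_ler_powR => //; first by rewrite nnegrE mulr_ge0// exprn_ge0// ltW.
    rewrite /Om /Omega kw.
    apply: (@le_trans _ _ (\sum_(0 <= j < k.+1) (2 * b0%:R) * m ^+ j)).
      rewrite big_seq [X in _ <= X]big_seq; apply: ler_sum => j _.
      by have := Bj j; rewrite in_itv/= /L => /andP[_]; lra.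
    rewrite -mulr_sumr.
    have -> : K * m ^+ k = 2 * b0%:R * (m ^+ k.+1 / (m - 1)).
      rewrite /K exprS; field; by rewrite subr_eq0 gt_eqF.
    by rewrite ler_wpM2l ?mulr_ge0 ?ler0n// geo_sum.
  apply: (le_trans H1); rewrite integral_cst//.
  have H2 : (P (F k `\` N) <= P (F k))%E by apply: le_measure; rewrite ?inE//; exact: subDsetl.
  apply: (@le_trans _ _ (((K * m ^+ k) `^ c)%:E * P (F k))%E).
    by apply: lee_wpmul2l; rewrite ?lee_fin ?powR_ge0.
  rewrite PK -EFinM lee_fin.
  rewrite (powRM _ K0 (exprn_ge0 k (ltW m0))) -(powR_mulrn k (ltW m0)) -powRrM (mulrC k%:R c) powRrM.
  rewrite (powR_mulrn k (powR_ge0 _ _)) exprMn.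
  have a0 : 0 <= K `^ c * m `^ c ^+ k by rewrite mulr_ge0 ?exprn_ge0 ?powR_ge0.
  have -> : K `^ c * (gamma ^+ k * m `^ c ^+ k) = (K `^ c * m `^ c ^+ k) * gamma ^+ k by ring.
  rewrite ler_wpM2l// lerBlDr lerDl exprn_ge0// ltW//.
split.
  move=> t t0; set n := (Num.bound alpha).+1.
  have an : alpha <= n%:R.
    have a0 : 0 <= alpha.
      by rewrite /alpha divr_ge0 ?(ltW lnm)// oppr_ge0 ln_le0// ltW.
    have := @archi_boundP R alpha a0 => /ltW H.
    by apply: (le_trans H); rewrite ler_nat.
  have n0 : (0 < n)%N by [].
  clearbody n.
  apply: (@LB (fun x => expR (t * x)) ((t / 2) ^+ n / n`!%:R * ((1 - gamma) / 2))).
  - have -> : (fun x : R => expR (t * x)) = expR \o (fun x => t * x) by [].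
    apply: measurableT_comp; first exact: measurable_expR.
    by apply: measurable_funM => //; exact: measurable_id.
  - by move=> x; rewrite expR_ge0.
  - by move=> x y _ xy; rewrite ler_expR ler_wpM2l// ltW.
  - rewrite mulr_gt0 ?divr_gt0 ?exprn_gt0 ?divr_gt0 ?ltr0n ?fact_gt0 ?subr_gt0//.
  move=> k; apply: (@fin_step R _ (m ^+ n)) => //.
  - by rewrite divr_ge0 ?exprn_ge0 ?divr_ge0 ?ltW.
  - by rewrite exprn_ge0 ?ltW.
  - rewrite -(powR_mulrn n (ltW m0)); apply: (@le_trans _ _ (gamma * m `^ alpha)).
      by rewrite malpha divff ?gt_eqF.
    by rewrite ler_wpM2l ?(ltW g0)//; apply: ler_powR => //; exact: ltW.
  - have : (t * (m ^+ k / 2)) ^+ n / n`!%:R <= expR (t * (L k / 2)).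
      apply: (@le_trans _ _ (expR (t * (m ^+ k / 2)))); last first.
        by rewrite ler_expR ler_pM2l// ler_pM2r ?invr_gt0//.
      have := @expR_ge1Dxn R (t * (m ^+ k / 2)) n.-1.
      move=> /(_ (mulr_ge0 (ltW t0) (divr_ge0 (exprn_ge0 _ (ltW m0)) (ler0n _ 2)))).
      rewrite (prednK n0) => H; apply: (le_trans _ H).
      have aux (x : R) : x <= 1 + x by rewrite lerDr ler01.
      exact: aux.
    move=> H; apply: le_trans H; rewrite le_eqVlt; apply/orP; left; apply/eqP.
    rewrite -exprM mulnC exprM !exprMn.
    move: (n`!%:R^-1) (t ^+ n) (m ^+ k ^+ n) (2^-1 ^+ n) => a b c e; ring.
move=> c c0; split => [ac|ca].
  apply: (@LB (fun x => x `^ c) ((2^-1) `^ c * ((1 - gamma) / 2))).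
  - exact: measurable_powR.
  - by move=> x; rewrite powR_ge0.
  - by move=> x y x0 xy; apply: ge0_ler_powR; rewrite ?nnegrE// (le_trans x0).
  - by rewrite mulr_gt0 ?powR_gt0 ?divr_gt0 ?subr_gt0.
  move=> k; apply: (@fin_step R _ (m `^ c)) => //.
  - exact: powR_ge0.
  - apply: (@le_trans _ _ (gamma * m `^ alpha)).
      by rewrite malpha divff ?gt_eqF.
    by rewrite ler_wpM2l ?(ltW g0)//; apply: ler_powR => //; exact: ltW.
  - have e1 : m `^ c ^+ k = (m ^+ k) `^ c.
      rewrite -(powR_mulrn k (powR_ge0 _ _)) -powRrM mulrC powRrM.
      by rewrite (powR_mulrn k (ltW m0)).
    have h2 : (0 : R) <= 2^-1 by rewrite invr_ge0.
    have hm : 0 <= m ^+ k by rewrite exprn_ge0// ltW.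
    rewrite e1 -(powRM _ h2 hm).
    apply: ge0_ler_powR => //; rewrite ?nnegrE.
    + exact: mulr_ge0.
    + by rewrite divr_ge0// ltW.
    + by rewrite mulrC ler_pM2r ?invr_gt0.
apply: UB => //.
have : m `^ c < m `^ alpha by rewrite !mpow ltr_expR ltr_pM2r.
rewrite malpha => H.
by rewrite -(divff (lt0r_neq0 g0)) ltr_pM2l.
Qed.
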